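(* Let $c_1>0>c_2$, $L=c_1-c_2$, $t_0>0$, let $u,q_1,q_2$ be as in the context, and for $\xi\in\mathbb R$ set $$C(\xi)=c_2-c_1e^{-Lt_0}+Le^{\xi+c_2t_0},\qquad D(\xi)=L^2e^{-c_1t_0}-Lc_1e^{\xi}+Lc_2e^{\xi-Lt_0}.$$ Then for every $\xi\in[q_1(0),q_2(0)]$ and every $t\in[0,t_0)$ both quantities $$D(\xi)+\big(c_1e^{c_2(t-t_0)}-c_2e^{c_1(t-t_0)}\big)C(\xi)\quad\text{and}\quad \big(c_1e^{L(t-t_0)}-c_2\big)D(\xi)+L^2e^{c_1(t-t_0)}C(\xi)$$ are strictly negative, so that $$y_m(t,\xi)=\ln\!\left(\frac{e^{c_2(t-t_0)}}{L}\cdot\frac{\big(c_1e^{L(t-t_0)}-c_2\big)D(\xi)+L^2e^{c_1(t-t_0)}C(\xi)}{D(\xi)+\big(c_1e^{c_2(t-t_0)}-c_2e^{c_1(t-t_0)}\big)C(\xi)}\right)$$ is well defined. Moreover, for each such $\xi$, $y_m(0,\xi)=\xi$, $q_1(t)\le y_m(t,\xi)\le q_2(t)$, and $t\mapsto y_m(t,\xi)$ solves the characteristic equation $$\partial_t y_m(t,\xi)=u\big(t,y_m(t,\xi)\big),\qquad 0\le t<t_0,$$ and $y_m(t,\xi)\to 0$ as $t\uparrow t_0$.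
   Context: For $t\neq t_0$ define $$p_1(t)=\frac{c_1-c_2e^{L(t-t_0)}}{1-e^{L(t-t_0)}},\qquad p_2(t)=\frac{c_2-c_1e^{L(t-t_0)}}{1-e^{L(t-t_0)}},$$ and for all $t$ define $$q_1(t)=\ln L+c_1(t-t_0)-\ln\big(c_1-c_2e^{L(t-t_0)}\big),\qquad q_2(t)=-\ln L+c_2(t-t_0)+\ln\big(c_1e^{L(t-t_0)}-c_2\big).$$ Set $u(t,x)=p_1(t)e^{-|x-q_1(t)|}+p_2(t)e^{-|x-q_2(t)|}$ for $x\in\mathbb R$, $t<t_0$. *)

(* Defs.v *)
From Stdlib Require Import Reals Lra.
Open Scope R_scope.

Definition Lc (c1 c2 : R) : R := c1 - c2.

Definition p1 (c1 c2 t0 t : R) : R :=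
  (c1 - c2 * exp (Lc c1 c2 * (t - t0))) / (1 - exp (Lc c1 c2 * (t - t0))).
Definition p2 (c1 c2 t0 t : R) : R :=
  (c2 - c1 * exp (Lc c1 c2 * (t - t0))) / (1 - exp (Lc c1 c2 * (t - t0))).
Definition q1 (c1 c2 t0 t : R) : R :=
  ln (Lc c1 c2) + c1 * (t - t0) - ln (c1 - c2 * exp (Lc c1 c2 * (t - t0))).
Definition q2 (c1 c2 t0 t : R) : R :=
  - ln (Lc c1 c2) + c2 * (t - t0) + ln (c1 * exp (Lc c1 c2 * (t - t0)) - c2).

Definition u (c1 c2 t0 t x : R) : R :=
  p1 c1 c2 t0 t * exp (- Rabs (x - q1 c1 c2 t0 t))
  + p2 c1 c2 t0 t * exp (- Rabs (x - q2 c1 c2 t0 t)).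

Definition Cxi (c1 c2 t0 xi : R) : R :=
  c2 - c1 * exp (- Lc c1 c2 * t0) + Lc c1 c2 * exp (xi + c2 * t0).
Definition Dxi (c1 c2 t0 xi : R) : R :=
  Lc c1 c2 ^ 2 * exp (- c1 * t0) - Lc c1 c2 * c1 * exp xi
  + Lc c1 c2 * c2 * exp (xi - Lc c1 c2 * t0).

Definition ymden (c1 c2 t0 t xi : R) : R :=
  Dxi c1 c2 t0 xi
  + (c1 * exp (c2 * (t - t0)) - c2 * exp (c1 * (t - t0))) * Cxi c1 c2 t0 xi.
Definition ymnum (c1 c2 t0 t xi : R) : R :=
  (c1 * exp (Lc c1 c2 * (t - t0)) - c2) * Dxi c1 c2 t0 xi
  + Lc c1 c2 ^ 2 * exp (c1 * (t - t0)) * Cxi c1 c2 t0 xi.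

Definition ym (c1 c2 t0 t xi : R) : R :=
  ln (exp (c2 * (t - t0)) / Lc c1 c2 * (ymnum c1 c2 t0 t xi / ymden c1 c2 t0 t xi)).

(* Main.v *)
Require Import Defs.
From Stdlib Require Import Reals Lra Psatz.
From Coquelicot Require Import Coquelicot.
Open Scope R_scope.

Lemma exp_q2 L A B : 0 < L -> 0 < B -> exp (- ln L + A + ln B) = / L * exp A * B.
Proof. intros. rewrite !exp_plus, exp_Ropp, !exp_ln; auto. Qed.
Lemma exp_q1 L A B : 0 < L -> 0 < B -> exp (ln L + A - ln B) = L * exp A / B.
Proof. intros. unfold Rminus. rewrite !exp_plus, exp_Ropp, !exp_ln; auto. Qed.

Lemma key_pos a b F : 0 < a -> b < 0 -> 0 < F < 1 ->
  0 < (a*F - b)*(a - b*F) - (a-b)^2*F.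
Proof.
  intros. replace ((a*F - b)*(a - b*F) - (a-b)^2*F) with ((-(a*b))*((1-F)*(1-F))) by ring.
  apply Rmult_lt_0_compat. nra. nra.
Qed.

Lemma alg_CD a b F G g X L : 0 < a -> b < 0 -> L = a - b -> 0 < F < 1 -> 0 < G ->
  0 < g -> g * G = 1 ->
  L * (F * G) / (a - b * F) <= X -> X <= / L * G * (a * F - b) ->
  b - a*F + L*(X*g) <= 0 /\ L^2*(F*G) - L*a*X + L*b*(X*F) <= 0 /\
  (b - a*F + L*(X*g) < 0 \/ L^2*(F*G) - L*a*X + L*b*(X*F) < 0).
Proof.
  intros ha hb hL hF hG hg hgG H1 H2.
  assert (hL0 : 0 < L) by lra.
  assert (hab : 0 < a - b*F) by nra.
  assert (hX1 : L*(F*G) <= X*(a-b*F)).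
  { apply Rmult_le_compat_r with (r := a - b*F) in H1; [|lra].
    replace (L * (F * G) / (a - b * F) * (a - b * F)) with (L*(F*G)) in H1 by (field; lra). lra. }
  assert (hD : L^2*(F*G) - L*a*X + L*b*(X*F) = L*(L*(F*G) - X*(a-b*F))) by ring.
  assert (hC : forall X', X' = / L * G * (a * F - b) -> L*(X'*g) = a*F - b).
  { intros X' ->. transitivity ((g*G)*(a*F-b)); [field; lra|]. rewrite hgG; ring. }
  assert (hCm : forall Y Z, Y <= Z -> L*(Y*g) <= L*(Z*g)).
  { intros. apply Rmult_le_compat_l; [lra|]. apply Rmult_le_compat_r; lra. }
  assert (hCs : forall Y Z, Y < Z -> L*(Y*g) < L*(Z*g)).
  { intros. apply Rmult_lt_compat_l; [lra|]. apply Rmult_lt_compat_r; lra. }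
  pose proof (hC _ eq_refl) as hC2.
  split; [| split].
  - pose proof (hCm _ _ H2). lra.
  - rewrite hD. assert (L * (F * G) - X * (a - b * F) <= 0) by lra. nra.
  - destruct (Rlt_or_le X (/ L * G * (a * F - b))) as [Hlt|Hge].
    + left. pose proof (hCs _ _ Hlt). lra.
    + right. rewrite hD.
      assert (X*(a - b*F) >= / L * G * (a * F - b) * (a-b*F)) by nra.
      assert (/ L * G * (a * F - b) * (a-b*F) - L*(F*G) = /L * G * ((a*F - b)*(a - b*F) - (a-b)^2*F)) by (subst L; field; lra).
      pose proof (key_pos a b F ha hb hF).
      assert (0 < /L * G * ((a*F - b)*(a - b*F) - (a-b)^2*F)).
      { apply Rmult_lt_0_compat; [apply Rmult_lt_0_compat|]; auto. apply Rinv_0_lt_compat; lra. }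
      nra.
Qed.

Lemma div_nonpos_neg x y : x <= 0 -> y < 0 -> 0 <= x / y.
Proof. intros. replace (x/y) with ((-x) * / (-y)) by (field; lra).
  apply Rmult_le_pos; [lra|]. left; apply Rinv_0_lt_compat; lra. Qed.

Lemma dn_neg a b L C D E e2 : 0 < a -> b < 0 -> L = a - b -> 0 < E -> 0 < e2 ->
  C <= 0 -> D <= 0 -> (C < 0 \/ D < 0) ->
  D + (a*e2 - b*(E*e2))*C < 0 /\ (a*E - b)*D + L^2*(E*e2)*C < 0.
Proof.
  intros ha hb hL hE he hC hD hCD.
  assert (hP : 0 < a*e2 - b*(E*e2)) by (assert (0 < a*e2) by nra; assert (0 < E*e2) by nra; nra).
  assert (hQ : 0 < a*E - b) by nra.
  assert (hR : 0 < L^2*(E*e2)) by (apply Rmult_lt_0_compat; [apply pow_lt; lra| nra]).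
  destruct hCD as [h|h]; split; nra.
Qed.

Lemma order_alg a b L C D E e2 : 0 < a -> b < 0 -> L = a - b -> 0 < E -> 0 < e2 ->
  C <= 0 -> D <= 0 -> D + (a*e2 - b*(E*e2))*C < 0 ->
  L * (E*e2) / (a - b*E) <= e2 / L * (((a*E - b)*D + L^2*(E*e2)*C) / (D + (a*e2 - b*(E*e2))*C))
  /\ e2 / L * (((a*E - b)*D + L^2*(E*e2)*C) / (D + (a*e2 - b*(E*e2))*C)) <= / L * e2 * (a*E - b).
Proof.
  intros ha hb hL hE he hC hD hden.
  assert (hL0 : 0 < L) by lra.
  assert (hab : 0 < a - b*E) by nra.
  set (den := D + (a*e2 - b*(E*e2))*C) in *.
  split.
  - assert (Hid : e2 / L * (((a*E - b)*D + L^2*(E*e2)*C) / den) - L * (E*e2) / (a - b*E)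
       = (e2 * (-(a*b)) * ((1-E)*(1-E)) * D) / (L * den * (a - b*E))).
    { unfold den. subst L. field. repeat split; try lra. fold den; lra. }
    assert (0 <= (e2 * (-(a*b)) * ((1-E)*(1-E)) * D) / (L * den * (a - b*E))).
    { apply div_nonpos_neg.
      - assert (0 <= e2 * (-(a*b)) * ((1-E)*(1-E))).
        { apply Rmult_le_pos; [apply Rmult_le_pos|]; [lra | nra | apply (Rle_0_sqr (1-E))]. }
        nra.
      - assert (0 < L * (a - b*E)) by nra. nra. }
    lra.
  - assert (Hid : e2 / L * (((a*E - b)*D + L^2*(E*e2)*C) / den) - / L * e2 * (a*E - b)
       = (e2 * e2 * (a*b) * ((1-E)*(1-E)) * C) / (L * den)).
    { unfold den. subst L. field. split; try lra. fold den; lra. }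
    assert (0 <= (- (e2 * e2 * (a*b) * ((1-E)*(1-E)) * C)) / (L * den)) .
    { apply div_nonpos_neg.
      - assert (0 <= e2 * e2 * (-(a*b)) * ((1-E)*(1-E))).
        { apply Rmult_le_pos; [apply Rmult_le_pos|]; [nra | nra | apply (Rle_0_sqr (1-E))]. }
        nra.
      - nra. }
    assert ((- (e2 * e2 * (a*b) * ((1-E)*(1-E)) * C)) / (L * den) =
       - ((e2 * e2 * (a*b) * ((1-E)*(1-E)) * C) / (L * den))) by (field; nra).
    lra.
Qed.

Lemma exp_mono x y : x <= y -> exp x <= exp y.
Proof. intros [h|h]; [left; apply exp_increasing; auto| subst; lra]. Qed.

Theorem mainTheorem4 (c1 c2 t0 : R) (hc1 : 0 < c1) (hc2 : c2 < 0) (ht0 : 0 < t0) :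
  forall xi : R, q1 c1 c2 t0 0 <= xi <= q2 c1 c2 t0 0 ->
    (forall t : R, 0 <= t < t0 ->
       ymden c1 c2 t0 t xi < 0 /\ ymnum c1 c2 t0 t xi < 0) /\
    ym c1 c2 t0 0 xi = xi /\
    (forall t : R, 0 <= t < t0 ->
       q1 c1 c2 t0 t <= ym c1 c2 t0 t xi <= q2 c1 c2 t0 t) /\
    (forall t : R, 0 <= t < t0 ->
       derivable_pt_lim (fun s => ym c1 c2 t0 s xi) t
         (u c1 c2 t0 t (ym c1 c2 t0 t xi))) /\
    limit1_in (fun t => ym c1 c2 t0 t xi) (fun t => t < t0) 0 t0.
Proof.
  intros xi [Hq1 Hq2].
  assert (hL : Lc c1 c2 = c1 - c2) by reflexivity.
  assert (hL0 : 0 < Lc c1 c2) by lra.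
  set (X := exp xi).
  assert (hX : 0 < X) by apply exp_pos.
  set (F := exp (Lc c1 c2 * (0 - t0))).
  set (G := exp (c2 * (0 - t0))).
  set (g := exp (c2 * t0)).
  assert (hF : 0 < F < 1).
  { split; [apply exp_pos|]. rewrite <- exp_0. apply exp_increasing. nra. }
  assert (hG : 0 < G) by apply exp_pos.
  assert (hg : 0 < g) by apply exp_pos.
  assert (hgG : g * G = 1).
  { unfold g, G. rewrite <- exp_plus, <- exp_0. f_equal. ring. }
  assert (hcF : 0 < c1 * F - c2) by nra.
  assert (hcF' : 0 < c1 - c2 * F) by nra.
  assert (HX2 : X <= / Lc c1 c2 * G * (c1 * F - c2)).
  { unfold X. apply exp_mono in Hq2. unfold q2 in Hq2. rewrite exp_q2 in Hq2; auto. }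
  assert (HX1 : Lc c1 c2 * (F * G) / (c1 - c2 * F) <= X).
  { unfold X. apply exp_mono in Hq1. unfold q1 in Hq1. rewrite exp_q1 in Hq1; auto.
    replace (exp (c1 * (0 - t0))) with (F * G) in Hq1; auto.
    unfold F, G. rewrite <- exp_plus. f_equal. rewrite hL. ring. }
  assert (HCeq : Cxi c1 c2 t0 xi = c2 - c1 * F + Lc c1 c2 * (X * g)).
  { unfold Cxi, X, g, F. rewrite <- exp_plus. replace (Lc c1 c2 * (0 - t0)) with (- Lc c1 c2 * t0) by ring. reflexivity. }
  assert (HDeq : Dxi c1 c2 t0 xi = (Lc c1 c2)^2 * (F * G) - Lc c1 c2 * c1 * X + Lc c1 c2 * c2 * (X * F)).
  { unfold Dxi, X, F, G. rewrite <- !exp_plus.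
    replace (- c1 * t0) with (Lc c1 c2 * (0 - t0) + c2 * (0 - t0)) by (rewrite hL; ring).
    replace (xi - Lc c1 c2 * t0) with (xi + Lc c1 c2 * (0 - t0)) by ring. reflexivity. }
  destruct (alg_CD c1 c2 F G g X (Lc c1 c2) hc1 hc2 hL hF hG hg hgG HX1 HX2) as [HC [HD HCD]].
  rewrite <- HCeq, <- HDeq in *.
  set (C := Cxi c1 c2 t0 xi) in *. set (D := Dxi c1 c2 t0 xi) in *.
  assert (Hsh : forall t, exp (c1 * (t - t0)) = exp (Lc c1 c2 * (t - t0)) * exp (c2 * (t - t0))).
  { intro t. rewrite <- exp_plus. f_equal. rewrite hL; ring. }
  assert (Hneg : forall t, ymden c1 c2 t0 t xi < 0 /\ ymnum c1 c2 t0 t xi < 0).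
  { intro t. unfold ymden, ymnum. fold C D. rewrite Hsh.
    apply dn_neg; auto; apply exp_pos. }
  split; [intros; apply Hneg|].
  split.
  { destruct (Hneg 0) as [Hd0 Hn0].
    unfold ym. unfold ymden, ymnum in *. fold C D in Hd0, Hn0 |- *. fold G F in Hd0, Hn0 |- *.
    rewrite Hsh in Hd0, Hn0 |- *. fold F G in Hd0, Hn0 |- *.
    set (num := (c1 * F - c2) * D + Lc c1 c2 ^ 2 * (F * G) * C) in *.
    set (den := D + (c1 * G - c2 * (F * G)) * C) in *.
    assert (Hid : G * num = Lc c1 c2 * X * den).
    { unfold num, den. rewrite HCeq, HDeq. replace g with (/ G) by (rewrite <- (Rmult_1_l (/G)), <- hgG; field; lra). field. lra. }
    replace (G / Lc c1 c2 * (num / den)) with X. { unfold X; apply ln_exp. }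
    transitivity (G * num / (Lc c1 c2 * den)).
    - rewrite Hid. field. lra.
    - field. lra. }
  assert (HcE : forall t, 0 < c1 - c2 * exp (Lc c1 c2 * (t - t0))).
  { intro t. pose proof (exp_pos (Lc c1 c2 * (t - t0))). nra. }
  assert (HcE' : forall t, 0 < c1 * exp (Lc c1 c2 * (t - t0)) - c2).
  { intro t. pose proof (exp_pos (Lc c1 c2 * (t - t0))). nra. }
  assert (Hq1e : forall t, q1 c1 c2 t0 t = ln (Lc c1 c2 * exp (c1 * (t - t0)) / (c1 - c2 * exp (Lc c1 c2 * (t - t0))))).
  { intro t. unfold q1. rewrite <- exp_q1, ln_exp; auto. }
  assert (Hq2e : forall t, q2 c1 c2 t0 t = ln (/ Lc c1 c2 * exp (c2 * (t - t0)) * (c1 * exp (Lc c1 c2 * (t - t0)) - c2))).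
  { intro t. unfold q2. rewrite <- exp_q2, ln_exp; auto. }
  assert (Hord : forall t, q1 c1 c2 t0 t <= ym c1 c2 t0 t xi <= q2 c1 c2 t0 t).
  { intro t. destruct (Hneg t) as [Hd Hn].
    rewrite Hq1e, Hq2e. unfold ym. unfold ymden, ymnum in *. fold C D in Hd, Hn |- *.
    pose proof (HcE t). pose proof (HcE' t).
    rewrite Hsh in *.
    set (E := exp (Lc c1 c2 * (t - t0))) in *.
    set (e2 := exp (c2 * (t - t0))) in *.
    assert (0 < E) by apply exp_pos. assert (0 < e2) by apply exp_pos.
    destruct (order_alg c1 c2 (Lc c1 c2) C D E e2) as [O1 O2]; auto.
    split; apply ln_le; auto.
    - apply Rdiv_lt_0_compat; auto. apply Rmult_lt_0_compat; auto. apply Rmult_lt_0_compat; auto.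
    - apply Rmult_lt_0_compat; [apply Rdiv_lt_0_compat; auto|].
      match goal with |- 0 < ?n / ?d => replace (n / d) with ((- n) / (- d)) by (field; lra) end.
      apply Rdiv_lt_0_compat; lra. }
  split; [intros; apply Hord|].
  assert (Harg : forall t, 0 < exp (c2 * (t - t0)) / Lc c1 c2 * (ymnum c1 c2 t0 t xi / ymden c1 c2 t0 t xi)).
  { intro t. destruct (Hneg t) as [Hd Hn]. apply Rmult_lt_0_compat.
      - apply Rdiv_lt_0_compat; [apply exp_pos|lra].
      - replace (ymnum c1 c2 t0 t xi / ymden c1 c2 t0 t xi) with
          ((- ymnum c1 c2 t0 t xi) / (- ymden c1 c2 t0 t xi)) by (field; lra).
        apply Rdiv_lt_0_compat; lra. }
  split.
  { intros t [ht1 ht2]. apply is_derive_Reals.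
    destruct (Hneg t) as [Hd Hn]. destruct (Hord t) as [Ho1 Ho2].
    set (y := ym c1 c2 t0 t xi) in *.
    assert (Hy : exp y = exp (c2 * (t - t0)) / Lc c1 c2 * (ymnum c1 c2 t0 t xi / ymden c1 c2 t0 t xi)).
    { unfold y, ym. apply exp_ln. apply Harg. }
    assert (Hu : u c1 c2 t0 t y = p1 c1 c2 t0 t * (exp (q1 c1 c2 t0 t) / exp y)
                 + p2 c1 c2 t0 t * (exp y / exp (q2 c1 c2 t0 t))).
    { unfold u. rewrite Rabs_pos_eq by lra. rewrite Rabs_left1 by lra.
      unfold Rdiv. rewrite <- !exp_Ropp, <- !exp_plus. do 2 f_equal; f_equal; f_equal; ring. }
    assert (Hx1 : exp (q1 c1 c2 t0 t) = Lc c1 c2 * exp (c1 * (t - t0)) / (c1 - c2 * exp (Lc c1 c2 * (t - t0)))).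
    { rewrite Hq1e. apply exp_ln. apply Rdiv_lt_0_compat; auto. apply Rmult_lt_0_compat; auto. apply exp_pos. }
    assert (Hx2 : exp (q2 c1 c2 t0 t) = / Lc c1 c2 * exp (c2 * (t - t0)) * (c1 * exp (Lc c1 c2 * (t - t0)) - c2)).
    { rewrite Hq2e. apply exp_ln. apply Rmult_lt_0_compat; auto. apply Rmult_lt_0_compat; [apply Rinv_0_lt_compat; auto| apply exp_pos]. }
    assert (HE1 : exp (Lc c1 c2 * (t - t0)) < 1).
    { rewrite <- exp_0. apply exp_increasing. nra. }
    pose proof (HcE t) as hce. pose proof (HcE' t) as hce'.
    pose proof Hd as Hd'. pose proof Hn as Hn'.
    unfold ymden, ymnum in Hd', Hn'. rewrite Hsh in Hd', Hn'.
    rewrite Hu, Hy, Hx1, Hx2.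
    unfold y, ym, ymnum, ymden, p1, p2. auto_derive.
    - split; [apply Rlt_not_eq; exact Hd| split; [exact (Harg t) | exact I]].
    - change (t + - t0) with (t - t0). rewrite !Hsh.
      fold C D in Hd', Hn' |- *. 
      set (E := exp (Lc c1 c2 * (t - t0))) in *.
      set (e2 := exp (c2 * (t - t0))) in *.
      assert (0 < E) by apply exp_pos. assert (0 < e2) by apply exp_pos.
      clearbody E e2. rewrite hL in *. field. repeat split; lra. }
  assert (Hy0 : ym c1 c2 t0 t0 xi = 0).
  { destruct (Hneg t0) as [Hd Hn]. unfold ym. unfold ymden, ymnum in *.
    replace (t0 - t0) with 0 in * by ring. rewrite !Rmult_0_r, exp_0 in *.
    fold C D in Hd, Hn |- *.
    replace (1 / Lc c1 c2 * (((c1 * 1 - c2) * D + Lc c1 c2 ^ 2 * 1 * C) / (D + (c1 * 1 - c2 * 1) * C))) with 1.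
    { apply ln_1. }
    rewrite hL in *. field. lra. }
  assert (Hc : continuity_pt (fun s => ym c1 c2 t0 s xi) t0).
  { apply continuity_pt_filterlim. apply (@ex_derive_continuous R_AbsRing R_NormedModule (fun s => ym c1 c2 t0 s xi)).  
    unfold ym, ymnum, ymden. auto_derive.
    destruct (Hneg t0) as [Hd Hn].
    split; [apply Rlt_not_eq; exact Hd| split; [exact (Harg t0) | exact I]]. }
  unfold continuity_pt, continue_in, limit1_in, limit_in in Hc |- *.
  intros eps heps. destruct (Hc eps heps) as [alp [halp H]].
  exists alp. split; auto. intros x [hx hd].
  rewrite <- Hy0. apply H. split; auto.
  unfold D_x, no_cond. split; auto. intro; subst; lra.
Qed.
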